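(* There exist six hyperplanes $W_1,\dots,W_6\subset\mathbb R^4$ which do phase retrieval on $\mathbb R^4$.
   Context: A hyperplane in $\mathbb R^4$ is a 3-dimensional subspace. A family of subspaces $\{W_i\}$ with orthogonal projections $P_i$ does phase retrieval if whenever $x,y\in\mathbb R^4$ satisfy $\|P_ix\|=\|P_iy\|$ for all $i$, then $x=\pm y$. *)

(* Defs.v *)
From mathcomp Require Import all_boot all_order all_algebra.
From mathcomp Require Import reals Rstruct.
Set Implicit Arguments. Unset Strict Implicit. Unset Printing Implicit Defensive.
Import Order.TTheory GRing.Theory Num.Theory.
Local Open Scope ring_scope.

(* Vectors of R^n are row vectors 'rV[R]_n; a subspace W of R^n is the row space
   of a square matrix W : 'M[R]_n (mxalgebra). *)

Definition Rn (n : nat) := 'rV[Rdefinitions.R]_n.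

Definition dotv n (x y : Rn n) : Rdefinitions.R := \sum_i x 0 i * y 0 i.
Definition normv n (x : Rn n) : Rdefinitions.R := Num.sqrt (dotv x x).

Definition hyperplane n (W : 'M[Rdefinitions.R]_n) : Prop := \rank W = n.-1.

(* Orthogonal projection onto the row space of W: the unique vector of W
   whose difference with x is orthogonal to W. *)
Definition orth_proj n (W : 'M[Rdefinitions.R]_n) (x : Rn n) : Rn n :=
  let B := row_base W in
  x *m B^T *m invmx (B *m B^T) *m B.

Definition phase_retrieval n (I : finType) (W : I -> 'M[Rdefinitions.R]_n) : Prop :=
  forall x y : Rn n,
    (forall i, normv (orth_proj (W i) x) = normv (orth_proj (W i) y)) ->
    x = y \/ x = - y.

(* Main.v *)
Require Import Defs.
From mathcomp Require Import all_boot all_order all_algebra.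
From mathcomp Require Import reals Rstruct.
From Stdlib Require Import Reals Lra Lia.
Set Implicit Arguments. Unset Strict Implicit. Unset Printing Implicit Defensive.

Section CoreSec.
Local Open Scope R_scope.

Lemma sqnn (e : R) : 0 <= e * e.
Proof. exact (Rle_0_sqr e). Qed.
Lemma sq0 (e : R) : e * e = 0 -> e = 0.
Proof. intros H; destruct (Rmult_integral _ _ H); auto. Qed.
Lemma kill (a b : R) : a <> 0 -> a * b = 0 -> b = 0.
Proof. intros Ha H; destruct (Rmult_integral _ _ H); [contradiction|assumption]. Qed.
Lemma fin (a0 a1 a2 a3 b0 b1 b2 b3 : R) :
  a0*b0 = 0 -> a0*b1 = 0 -> a0*b2 = 0 -> a0*b3 = 0 ->
  a1*b0 = 0 -> a1*b1 = 0 -> a1*b2 = 0 -> a1*b3 = 0 ->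
  a2*b0 = 0 -> a2*b1 = 0 -> a2*b2 = 0 -> a2*b3 = 0 ->
  a3*b0 = 0 -> a3*b1 = 0 -> a3*b2 = 0 -> a3*b3 = 0 ->
  (a0 = 0 /\ a1 = 0 /\ a2 = 0 /\ a3 = 0) \/ (b0 = 0 /\ b1 = 0 /\ b2 = 0 /\ b3 = 0).
Proof.
intros.
destruct (Req_dec a0 0); [destruct (Req_dec a1 0); [destruct (Req_dec a2 0); [destruct (Req_dec a3 0)|]|]|];
  try (left; tauto); right; repeat split; eapply kill; eauto.
Qed.
Lemma cert_core (a0 a1 a2 a3 b0 b1 b2 b3 : R) :
  6 * (a0 * b0) + 6 * (a0 * b1) + 3 * (a0 * b2) + 3 * (a0 * b3) + 6 * (a1 * b0) + 11 * (a1 * b1) + (-2) * (a1 * b2) + (-2) * (a1 * b3) + 3 * (a2 * b0) + (-2) * (a2 * b1) + 14 * (a2 * b2) + (-1) * (a2 * b3) + 3 * (a3 * b0) + (-2) * (a3 * b1) + (-1) * (a3 * b2) + 14 * (a3 * b3) = 0 ->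
  5 * (a0 * b0) + 6 * (a0 * b1) + (-3) * (a0 * b2) + 6 * (a1 * b0) + 10 * (a1 * b1) + 2 * (a1 * b2) + (-3) * (a2 * b0) + 2 * (a2 * b1) + 13 * (a2 * b2) + 14 * (a3 * b3) = 0 ->
  6 * (a0 * b0) + 5 * (a1 * b1) + 2 * (a1 * b2) + (-1) * (a1 * b3) + 2 * (a2 * b1) + 2 * (a2 * b2) + 2 * (a2 * b3) + (-1) * (a3 * b1) + 2 * (a3 * b2) + 5 * (a3 * b3) = 0 ->
  17 * (a0 * b0) + (-6) * (a0 * b1) + (-6) * (a0 * b2) + 9 * (a0 * b3) + (-6) * (a1 * b0) + 22 * (a1 * b1) + (-4) * (a1 * b2) + 6 * (a1 * b3) + (-6) * (a2 * b0) + (-4) * (a2 * b1) + 22 * (a2 * b2) + 6 * (a2 * b3) + 9 * (a3 * b0) + 6 * (a3 * b1) + 6 * (a3 * b2) + 17 * (a3 * b3) = 0 ->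
  14 * (a0 * b0) + (-4) * (a0 * b1) + 6 * (a0 * b2) + 2 * (a0 * b3) + (-4) * (a1 * b0) + 14 * (a1 * b1) + 6 * (a1 * b2) + 2 * (a1 * b3) + 6 * (a2 * b0) + 6 * (a2 * b1) + 9 * (a2 * b2) + (-3) * (a2 * b3) + 2 * (a3 * b0) + 2 * (a3 * b1) + (-3) * (a3 * b2) + 17 * (a3 * b3) = 0 ->
  12 * (a0 * b0) + 8 * (a1 * b1) + 4 * (a1 * b2) + 4 * (a1 * b3) + 4 * (a2 * b1) + 8 * (a2 * b2) + (-4) * (a2 * b3) + 4 * (a3 * b1) + (-4) * (a3 * b2) + 8 * (a3 * b3) = 0 ->
  (a0 = 0 /\ a1 = 0 /\ a2 = 0 /\ a3 = 0) \/ (b0 = 0 /\ b1 = 0 /\ b2 = 0 /\ b3 = 0).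
Proof.
intros H1 H2 H3 H4 H5 H6.
assert (Hid : 100000000 * ((6 * (a0 * b0) + 6 * (a0 * b1) + 3 * (a0 * b2) + 3 * (a0 * b3) + 6 * (a1 * b0) + 11 * (a1 * b1) + (-2) * (a1 * b2) + (-2) * (a1 * b3) + 3 * (a2 * b0) + (-2) * (a2 * b1) + 14 * (a2 * b2) + (-1) * (a2 * b3) + 3 * (a3 * b0) + (-2) * (a3 * b1) + (-1) * (a3 * b2) + 14 * (a3 * b3)) * (6 * (a0 * b0) + 6 * (a0 * b1) + 3 * (a0 * b2) + 3 * (a0 * b3) + 6 * (a1 * b0) + 11 * (a1 * b1) + (-2) * (a1 * b2) + (-2) * (a1 * b3) + 3 * (a2 * b0) + (-2) * (a2 * b1) + 14 * (a2 * b2) + (-1) * (a2 * b3) + 3 * (a3 * b0) + (-2) * (a3 * b1) + (-1) * (a3 * b2) + 14 * (a3 * b3)) + (5 * (a0 * b0) + 6 * (a0 * b1) + (-3) * (a0 * b2) + 6 * (a1 * b0) + 10 * (a1 * b1) + 2 * (a1 * b2) + (-3) * (a2 * b0) + 2 * (a2 * b1) + 13 * (a2 * b2) + 14 * (a3 * b3)) * (5 * (a0 * b0) + 6 * (a0 * b1) + (-3) * (a0 * b2) + 6 * (a1 * b0) + 10 * (a1 * b1) + 2 * (a1 * b2) + (-3) * (a2 * b0) + 2 * (a2 * b1) + 13 * (a2 * b2) + 14 * (a3 * b3)) + (6 * (a0 * b0) + 5 * (a1 * b1) + 2 * (a1 * b2) + (-1) * (a1 * b3) + 2 * (a2 * b1)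 + 2 * (a2 * b2) + 2 * (a2 * b3) + (-1) * (a3 * b1) + 2 * (a3 * b2) + 5 * (a3 * b3)) * (6 * (a0 * b0) + 5 * (a1 * b1) + 2 * (a1 * b2) + (-1) * (a1 * b3) + 2 * (a2 * b1) + 2 * (a2 * b2) + 2 * (a2 * b3) + (-1) * (a3 * b1) + 2 * (a3 * b2) + 5 * (a3 * b3)) + (17 * (a0 * b0) + (-6) * (a0 * b1) + (-6) * (a0 * b2) + 9 * (a0 * b3) + (-6) * (a1 * b0) + 22 * (a1 * b1) + (-4) * (a1 * b2) + 6 * (a1 * b3) + (-6) * (a2 * b0) + (-4) * (a2 * b1) + 22 * (a2 * b2) + 6 * (a2 * b3) + 9 * (a3 * b0) + 6 * (a3 * b1) + 6 * (a3 * b2) + 17 * (a3 * b3)) * (17 * (a0 * b0) + (-6) * (a0 * b1) + (-6) * (a0 * b2) + 9 * (a0 * b3) + (-6) * (a1 * b0) + 22 * (a1 * b1) + (-4) * (a1 * b2) + 6 * (a1 * b3) + (-6) * (a2 * b0) + (-4) * (a2 * b1) + 22 * (a2 * b2) + 6 * (a2 * b3) + 9 * (a3 * b0) + 6 * (a3 * b1) + 6 * (a3 * b2) + 17 * (a3 * b3)) + (14 * (a0 * b0) + (-4) * (a0 * b1) + 6 * (a0 * b2) + 2 * (a0 * b3) + (-4) * (a1 * b0) + 14 * (a1 * b1) + 6 * (a1 * b2) + 2 * (a1 * b3) + 6 * (a2 * b0) + 6 * (a2 * b1) + 9 * (a2 * b2) + (-3) * (a2 * b3) + 2 * (a3 *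 b0) + 2 * (a3 * b1) + (-3) * (a3 * b2) + 17 * (a3 * b3)) * (14 * (a0 * b0) + (-4) * (a0 * b1) + 6 * (a0 * b2) + 2 * (a0 * b3) + (-4) * (a1 * b0) + 14 * (a1 * b1) + 6 * (a1 * b2) + 2 * (a1 * b3) + 6 * (a2 * b0) + 6 * (a2 * b1) + 9 * (a2 * b2) + (-3) * (a2 * b3) + 2 * (a3 * b0) + 2 * (a3 * b1) + (-3) * (a3 * b2) + 17 * (a3 * b3)) + (12 * (a0 * b0) + 8 * (a1 * b1) + 4 * (a1 * b2) + 4 * (a1 * b3) + 4 * (a2 * b1) + 8 * (a2 * b2) + (-4) * (a2 * b3) + 4 * (a3 * b1) + (-4) * (a3 * b2) + 8 * (a3 * b3)) * (12 * (a0 * b0) + 8 * (a1 * b1) + 4 * (a1 * b2) + 4 * (a1 * b3) + 4 * (a2 * b1) + 8 * (a2 * b2) + (-4) * (a2 * b3) + 4 * (a3 * b1) + (-4) * (a3 * b2) + 8 * (a3 * b3))) =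
  (269435 * (a0 * b0) + (-34146) * (a0 * b1) + (-5567) * (a0 * b2) + 73858 * (a0 * b3) + (-34146) * (a1 * b0) + 301810 * (a1 * b1) + 26938 * (a1 * b2) + 59465 * (a1 * b3) + (-5567) * (a2 * b0) + 26938 * (a2 * b1) + 281991 * (a2 * b2) + 7245 * (a2 * b3) + 73858 * (a3 * b0) + 59465 * (a3 * b1) + 7245 * (a3 * b2) + 300912 * (a3 * b3)) * (269435 * (a0 * b0) + (-34146) * (a0 * b1) + (-5567) * (a0 * b2) + 73858 * (a0 * b3) + (-34146) * (a1 * b0) + 301810 * (a1 * b1) + 26938 * (a1 * b2) + 59465 * (a1 * b3) + (-5567) * (a2 * b0) + 26938 * (a2 * b1) + 281991 * (a2 * b2) + 7245 * (a2 * b3) + 73858 * (a3 * b0) + 59465 * (a3 * b1) + 7245 * (a3 * b2) + 300912 * (a3 * b3)) +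
  (105967 * (a0 * b1) + 9530 * (a0 * b2) + (-17723) * (a0 * b3) + 104901 * (a1 * b0) + 38743 * (a1 * b1) + 8397 * (a1 * b2) + (-32562) * (a1 * b3) + 10870 * (a2 * b0) + 8680 * (a2 * b1) + 84967 * (a2 * b2) + (-27892) * (a2 * b3) + (-17931) * (a3 * b0) + (-33685) * (a3 * b1) + (-26476) * (a3 * b2) + 95905 * (a3 * b3)) * (105967 * (a0 * b1) + 9530 * (a0 * b2) + (-17723) * (a0 * b3) + 104901 * (a1 * b0) + 38743 * (a1 * b1) + 8397 * (a1 * b2) + (-32562) * (a1 * b3) + 10870 * (a2 * b0) + 8680 * (a2 * b1) + 84967 * (a2 * b2) + (-27892) * (a2 * b3) + (-17931) * (a3 * b0) + (-33685) * (a3 * b1) + (-26476) * (a3 * b2) + 95905 * (a3 * b3)) +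
  (94198 * (a0 * b2) + (-28875) * (a0 * b3) + 1615 * (a1 * b0) + (-33536) * (a1 * b1) + 51699 * (a1 * b2) + (-25750) * (a1 * b3) + 91164 * (a2 * b0) + 51936 * (a2 * b1) + (-71550) * (a2 * b2) + (-55382) * (a2 * b3) + (-30467) * (a3 * b0) + (-24363) * (a3 * b1) + (-57404) * (a3 * b2) + 7444 * (a3 * b3)) * (94198 * (a0 * b2) + (-28875) * (a0 * b3) + 1615 * (a1 * b0) + (-33536) * (a1 * b1) + 51699 * (a1 * b2) + (-25750) * (a1 * b3) + 91164 * (a2 * b0) + 51936 * (a2 * b1) + (-71550) * (a2 * b2) + (-55382) * (a2 * b3) + (-30467) * (a3 * b0) + (-24363) * (a3 * b1) + (-57404) * (a3 * b2) + 7444 * (a3 * b3)) +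
  (52840 * (a0 * b3) + 109 * (a1 * b0) + 60714 * (a1 * b1) + (-62092) * (a1 * b2) + (-9702) * (a1 * b3) + (-4085) * (a2 * b0) + (-59294) * (a2 * b1) + 80157 * (a2 * b2) + 35417 * (a2 * b3) + 44879 * (a3 * b0) + (-10985) * (a3 * b1) + 35922 * (a3 * b2) + 49013 * (a3 * b3)) * (52840 * (a0 * b3) + 109 * (a1 * b0) + 60714 * (a1 * b1) + (-62092) * (a1 * b2) + (-9702) * (a1 * b3) + (-4085) * (a2 * b0) + (-59294) * (a2 * b1) + 80157 * (a2 * b2) + 35417 * (a2 * b3) + 44879 * (a3 * b0) + (-10985) * (a3 * b1) + 35922 * (a3 * b2) + 49013 * (a3 * b3)) +
  (14908 * (a1 * b0) + 5962 * (a1 * b1) + (-2536) * (a1 * b2) + (-7451) * (a1 * b3) + (-18596) * (a2 * b0) + (-6587) * (a2 * b1) + 13246 * (a2 * b2) + 13810 * (a2 * b3) + 3167 * (a3 * b0) + 8293 * (a3 * b1) + (-5998) * (a3 * b2) + 5696 * (a3 * b3)) * (14908 * (a1 * b0) + 5962 * (a1 * b1) + (-2536) * (a1 * b2) + (-7451) * (a1 * b3) + (-18596) * (a2 * b0) + (-6587) * (a2 * b1) + 13246 * (a2 * b2) + 13810 * (a2 * b3) + 3167 * (a3 * b0) + 8293 * (a3 * b1) + (-5998) * (a3 * b2) + 5696 * (a3 * b3)) +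
  (39478 * (a1 * b1) + 16802 * (a1 * b2) + (-10532) * (a1 * b3) + 5199 * (a2 * b0) + 13034 * (a2 * b1) + 28308 * (a2 * b2) + 11377 * (a2 * b3) + 10616 * (a3 * b0) + (-8654) * (a3 * b1) + 10484 * (a3 * b2) + 59610 * (a3 * b3)) * (39478 * (a1 * b1) + 16802 * (a1 * b2) + (-10532) * (a1 * b3) + 5199 * (a2 * b0) + 13034 * (a2 * b1) + 28308 * (a2 * b2) + 11377 * (a2 * b3) + 10616 * (a3 * b0) + (-8654) * (a3 * b1) + 10484 * (a3 * b2) + 59610 * (a3 * b3)) +
  (19540 * (a1 * b2) + 8111 * (a1 * b3) + (-11134) * (a2 * b0) + 27481 * (a2 * b1) + (-3863) * (a2 * b2) + (-10426) * (a2 * b3) + (-22752) * (a3 * b0) + 4087 * (a3 * b1) + (-8492) * (a3 * b2) + 9932 * (a3 * b3)) * (19540 * (a1 * b2) + 8111 * (a1 * b3) + (-11134) * (a2 * b0) + 27481 * (a2 * b1) + (-3863) * (a2 * b2) + (-10426) * (a2 * b3) + (-22752) * (a3 * b0) + 4087 * (a3 * b1) + (-8492) * (a3 * b2) + 9932 * (a3 * b3)) +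
  (22565 * (a1 * b3) + 2322 * (a2 * b0) + (-1631) * (a2 * b1) + 22621 * (a2 * b2) + (-31653) * (a2 * b3) + 4739 * (a3 * b0) + 23204 * (a3 * b1) + (-31997) * (a3 * b2) + (-623) * (a3 * b3)) * (22565 * (a1 * b3) + 2322 * (a2 * b0) + (-1631) * (a2 * b1) + 22621 * (a2 * b2) + (-31653) * (a2 * b3) + 4739 * (a3 * b0) + 23204 * (a3 * b1) + (-31997) * (a3 * b2) + (-623) * (a3 * b3)) +
  (4014 * (a2 * b0) + (-439) * (a2 * b1) + 36 * (a2 * b2) + (-1968) * (a2 * b3) + 1572 * (a3 * b0) + (-701) * (a3 * b1) + (-307) * (a3 * b2) + 584 * (a3 * b3)) * (4014 * (a2 * b0) + (-439) * (a2 * b1) + 36 * (a2 * b2) + (-1968) * (a2 * b3) + 1572 * (a3 * b0) + (-701) * (a3 * b1) + (-307) * (a3 * b2) + 584 * (a3 * b3)) +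
  (3085 * (a2 * b1) + (-1130) * (a2 * b2) + 2 * (a2 * b3) + (-2388) * (a3 * b0) + (-935) * (a3 * b1) + 612 * (a3 * b2) + 652 * (a3 * b3)) * (3085 * (a2 * b1) + (-1130) * (a2 * b2) + 2 * (a2 * b3) + (-2388) * (a3 * b0) + (-935) * (a3 * b1) + 612 * (a3 * b2) + 652 * (a3 * b3)) +
  (2765 * (a2 * b2) + (-1367) * (a2 * b3) + 547 * (a3 * b0) + 1766 * (a3 * b1) + (-2078) * (a3 * b2) + 1177 * (a3 * b3)) * (2765 * (a2 * b2) + (-1367) * (a2 * b3) + 547 * (a3 * b0) + 1766 * (a3 * b1) + (-2078) * (a3 * b2) + 1177 * (a3 * b3)) +
  (2547 * (a2 * b3) + 32 * (a3 * b0) + (-971) * (a3 * b1) + 1712 * (a3 * b2) + 427 * (a3 * b3)) * (2547 * (a2 * b3) + 32 * (a3 * b0) + (-971) * (a3 * b1) + 1712 * (a3 * b2) + 427 * (a3 * b3)) +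
  (2176 * (a3 * b0) + 601 * (a3 * b1) + (-829) * (a3 * b2) + 3 * (a3 * b3)) * (2176 * (a3 * b0) + 601 * (a3 * b1) + (-829) * (a3 * b2) + 3 * (a3 * b3)) +
  (2322 * (a3 * b1) + (-1191) * (a3 * b2) + (-678) * (a3 * b3)) * (2322 * (a3 * b1) + (-1191) * (a3 * b2) + (-678) * (a3 * b3)) +
  (2058 * (a3 * b2) + 77 * (a3 * b3)) * (2058 * (a3 * b2) + 77 * (a3 * b3)) +
  (2047 * (a3 * b3)) * (2047 * (a3 * b3)) +
  127510 * (((a0 * b0) + (a0 * b1)) * ((a0 * b0) + (a0 * b1))) +
  55355 * (((a0 * b0) + (-1) * (a0 * b2)) * ((a0 * b0) + (-1) * (a0 * b2))) +
  69770 * (((a0 * b0) + (a0 * b3)) * ((a0 * b0) + (a0 * b3))) +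
  127510 * (((a0 * b0) + (a1 * b0)) * ((a0 * b0) + (a1 * b0))) +
  177350 * (((a0 * b0) + (-1) * (a1 * b1)) * ((a0 * b0) + (-1) * (a1 * b1))) +
  40030 * (((a0 * b0) + (-1) * (a1 * b2)) * ((a0 * b0) + (-1) * (a1 * b2))) +
  47725 * (((a0 * b0) + (a1 * b3)) * ((a0 * b0) + (a1 * b3))) +
  55355 * (((a0 * b0) + (-1) * (a2 * b0)) * ((a0 * b0) + (-1) * (a2 * b0))) +
  40030 * (((a0 * b0) + (-1) * (a2 * b1)) * ((a0 * b0) + (-1) * (a2 * b1))) +
  245085 * (((a0 * b0) + (-1) * (a2 * b2)) * ((a0 * b0) + (-1) * (a2 * b2))) +
  56575 * (((a0 * b0) + (-1) * (a2 * b3)) * ((a0 * b0) + (-1) * (a2 * b3))) +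
  69770 * (((a0 * b0) + (a3 * b0)) * ((a0 * b0) + (a3 * b0))) +
  47725 * (((a0 * b0) + (a3 * b1)) * ((a0 * b0) + (a3 * b1))) +
  56575 * (((a0 * b0) + (-1) * (a3 * b2)) * ((a0 * b0) + (-1) * (a3 * b2))) +
  224720 * (((a0 * b0) + (-1) * (a3 * b3)) * ((a0 * b0) + (-1) * (a3 * b3))) +
  43708 * (((a0 * b1) + (a0 * b2)) * ((a0 * b1) + (a0 * b2))) +
  8409 * (((a0 * b1) + (a0 * b3)) * ((a0 * b1) + (a0 * b3))) +
  6417 * (((a0 * b1) + (a1 * b0)) * ((a0 * b1) + (a1 * b0))) +
  124779 * (((a0 * b1) + (a1 * b1)) * ((a0 * b1) + (a1 * b1))) +
  20049 * (((a0 * b1) + (a1 * b2)) * ((a0 * b1) + (a1 * b2))) +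
  10656 * (((a0 * b1) + (-1) * (a1 * b3)) * ((a0 * b1) + (-1) * (a1 * b3))) +
  47928 * (((a0 * b1) + (a2 * b0)) * ((a0 * b1) + (a2 * b0))) +
  31388 * (((a0 * b1) + (a2 * b1)) * ((a0 * b1) + (a2 * b1))) +
  166597 * (((a0 * b1) + (a2 * b2)) * ((a0 * b1) + (a2 * b2))) +
  19334 * (((a0 * b1) + (a2 * b3)) * ((a0 * b1) + (a2 * b3))) +
  49545 * (((a0 * b1) + (a3 * b0)) * ((a0 * b1) + (a3 * b0))) +
  9715 * (((a0 * b1) + (-1) * (a3 * b1)) * ((a0 * b1) + (-1) * (a3 * b1))) +
  29938 * (((a0 * b1) + (-1) * (a3 * b2)) * ((a0 * b1) + (-1) * (a3 * b2))) +
  176017 * (((a0 * b1) + (a3 * b3)) * ((a0 * b1) + (a3 * b3))) +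
  34926 * (((a0 * b2) + (a0 * b3)) * ((a0 * b2) + (a0 * b3))) +
  72918 * (((a0 * b2) + (a1 * b0)) * ((a0 * b2) + (a1 * b0))) +
  20392 * (((a0 * b2) + (-1) * (a1 * b1)) * ((a0 * b2) + (-1) * (a1 * b1))) +
  1966 * (((a0 * b2) + (-1) * (a1 * b2)) * ((a0 * b2) + (-1) * (a1 * b2))) +
  43985 * (((a0 * b2) + (-1) * (a1 * b3)) * ((a0 * b2) + (-1) * (a1 * b3))) +
  49061 * (((a0 * b2) + (-1) * (a2 * b0)) * ((a0 * b2) + (-1) * (a2 * b0))) +
  23882 * (((a0 * b2) + (-1) * (a2 * b1)) * ((a0 * b2) + (-1) * (a2 * b1))) +
  24713 * (((a0 * b2) + (-1) * (a2 * b2)) * ((a0 * b2) + (-1) * (a2 * b2))) +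
  17311 * (((a0 * b2) + (a2 * b3)) * ((a0 * b2) + (a2 * b3))) +
  19618 * (((a0 * b2) + (-1) * (a3 * b0)) * ((a0 * b2) + (-1) * (a3 * b0))) +
  5579 * (((a0 * b2) + (a3 * b1)) * ((a0 * b2) + (a3 * b1))) +
  8813 * (((a0 * b2) + (-1) * (a3 * b2)) * ((a0 * b2) + (-1) * (a3 * b2))) +
  7458 * (((a0 * b2) + (-1) * (a3 * b3)) * ((a0 * b2) + (-1) * (a3 * b3))) +
  10744 * (((a0 * b3) + (-1) * (a1 * b0)) * ((a0 * b3) + (-1) * (a1 * b0))) +
  79449 * (((a0 * b3) + (a1 * b1)) * ((a0 * b3) + (a1 * b1))) +
  16868 * (((a0 * b3) + (-1) * (a1 * b2)) * ((a0 * b3) + (-1) * (a1 * b2))) +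
  60134 * (((a0 * b3) + (a1 * b3)) * ((a0 * b3) + (a1 * b3))) +
  28396 * (((a0 * b3) + (a2 * b0)) * ((a0 * b3) + (a2 * b0))) +
  4204 * (((a0 * b3) + (-1) * (a2 * b1)) * ((a0 * b3) + (-1) * (a2 * b1))) +
  76733 * (((a0 * b3) + (a2 * b2)) * ((a0 * b3) + (a2 * b2))) +
  20656 * (((a0 * b3) + (-1) * (a2 * b3)) * ((a0 * b3) + (-1) * (a2 * b3))) +
  63738 * (((a0 * b3) + (a3 * b0)) * ((a0 * b3) + (a3 * b0))) +
  550 * (((a0 * b3) + (a3 * b1)) * ((a0 * b3) + (a3 * b1))) +
  5662 * (((a0 * b3) + (a3 * b2)) * ((a0 * b3) + (a3 * b2))) +
  64399 * (((a0 * b3) + (a3 * b3)) * ((a0 * b3) + (a3 * b3))) +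
  86135 * (((a1 * b0) + (a1 * b1)) * ((a1 * b0) + (a1 * b1))) +
  52082 * (((a1 * b0) + (a1 * b2)) * ((a1 * b0) + (a1 * b2))) +
  1528 * (((a1 * b0) + (a1 * b3)) * ((a1 * b0) + (a1 * b3))) +
  79921 * (((a1 * b0) + (a2 * b0)) * ((a1 * b0) + (a2 * b0))) +
  69670 * (((a1 * b0) + (a2 * b1)) * ((a1 * b0) + (a2 * b1))) +
  86188 * (((a1 * b0) + (a2 * b2)) * ((a1 * b0) + (a2 * b2))) +
  11541 * (((a1 * b0) + (-1) * (a2 * b3)) * ((a1 * b0) + (-1) * (a2 * b3))) +
  33857 * (((a1 * b0) + (a3 * b0)) * ((a1 * b0) + (a3 * b0))) +
  6359 * (((a1 * b0) + (-1) * (a3 * b1)) * ((a1 * b0) + (-1) * (a3 * b1))) +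
  43208 * (((a1 * b0) + (-1) * (a3 * b2)) * ((a1 * b0) + (-1) * (a3 * b2))) +
  130302 * (((a1 * b0) + (a3 * b3)) * ((a1 * b0) + (a3 * b3))) +
  41123 * (((a1 * b1) + (-1) * (a1 * b2)) * ((a1 * b1) + (-1) * (a1 * b2))) +
  118302 * (((a1 * b1) + (a1 * b3)) * ((a1 * b1) + (a1 * b3))) +
  44316 * (((a1 * b1) + (-1) * (a2 * b0)) * ((a1 * b1) + (-1) * (a2 * b0))) +
  29966 * (((a1 * b1) + (-1) * (a2 * b1)) * ((a1 * b1) + (-1) * (a2 * b1))) +
  248965 * (((a1 * b1) + (-1) * (a2 * b2)) * ((a1 * b1) + (-1) * (a2 * b2))) +
  68610 * (((a1 * b1) + (-1) * (a2 * b3)) * ((a1 * b1) + (-1) * (a2 * b3))) +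
  112733 * (((a1 * b1) + (a3 * b0)) * ((a1 * b1) + (a3 * b0))) +
  31773 * (((a1 * b1) + (a3 * b1)) * ((a1 * b1) + (a3 * b1))) +
  49910 * (((a1 * b1) + (-1) * (a3 * b2)) * ((a1 * b1) + (-1) * (a3 * b2))) +
  274565 * (((a1 * b1) + (-1) * (a3 * b3)) * ((a1 * b1) + (-1) * (a3 * b3))) +
  38402 * (((a1 * b2) + (-1) * (a1 * b3)) * ((a1 * b2) + (-1) * (a1 * b3))) +
  306 * (((a1 * b2) + (a2 * b0)) * ((a1 * b2) + (a2 * b0))) +
  55244 * (((a1 * b2) + (a2 * b1)) * ((a1 * b2) + (a2 * b1))) +
  125703 * (((a1 * b2) + (-1) * (a2 * b2)) * ((a1 * b2) + (-1) * (a2 * b2))) +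
  60458 * (((a1 * b2) + (-1) * (a2 * b3)) * ((a1 * b2) + (-1) * (a2 * b3))) +
  44336 * (((a1 * b2) + (-1) * (a3 * b0)) * ((a1 * b2) + (-1) * (a3 * b0))) +
  22468 * (((a1 * b2) + (a3 * b1)) * ((a1 * b2) + (a3 * b1))) +
  78034 * (((a1 * b2) + (-1) * (a3 * b2)) * ((a1 * b2) + (-1) * (a3 * b2))) +
  7345 * (((a1 * b2) + (-1) * (a3 * b3)) * ((a1 * b2) + (-1) * (a3 * b3))) +
  60059 * (((a1 * b3) + (-1) * (a2 * b0)) * ((a1 * b3) + (-1) * (a2 * b0))) +
  48923 * (((a1 * b3) + (-1) * (a2 * b1)) * ((a1 * b3) + (-1) * (a2 * b1))) +
  97083 * (((a1 * b3) + (a2 * b2)) * ((a1 * b3) + (a2 * b2))) +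
  22110 * (((a1 * b3) + (a2 * b3)) * ((a1 * b3) + (a2 * b3))) +
  66582 * (((a1 * b3) + (a3 * b0)) * ((a1 * b3) + (a3 * b0))) +
  38383 * (((a1 * b3) + (a3 * b1)) * ((a1 * b3) + (a3 * b1))) +
  44114 * (((a1 * b3) + (a3 * b2)) * ((a1 * b3) + (a3 * b2))) +
  86615 * (((a1 * b3) + (a3 * b3)) * ((a1 * b3) + (a3 * b3))) +
  30084 * (((a2 * b0) + (-1) * (a2 * b1)) * ((a2 * b0) + (-1) * (a2 * b1))) +
  53632 * (((a2 * b0) + (-1) * (a2 * b2)) * ((a2 * b0) + (-1) * (a2 * b2))) +
  18519 * (((a2 * b0) + (a2 * b3)) * ((a2 * b0) + (a2 * b3))) +
  32027 * (((a2 * b0) + (-1) * (a3 * b0)) * ((a2 * b0) + (-1) * (a3 * b0))) +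
  30 * (((a2 * b0) + (-1) * (a3 * b1)) * ((a2 * b0) + (-1) * (a3 * b1))) +
  19059 * (((a2 * b0) + (-1) * (a3 * b2)) * ((a2 * b0) + (-1) * (a3 * b2))) +
  21213 * (((a2 * b0) + (-1) * (a3 * b3)) * ((a2 * b0) + (-1) * (a3 * b3))) +
  96422 * (((a2 * b1) + (-1) * (a2 * b2)) * ((a2 * b1) + (-1) * (a2 * b2))) +
  28707 * (((a2 * b1) + (-1) * (a2 * b3)) * ((a2 * b1) + (-1) * (a2 * b3))) +
  29992 * (((a2 * b1) + (-1) * (a3 * b0)) * ((a2 * b1) + (-1) * (a3 * b0))) +
  19648 * (((a2 * b1) + (a3 * b1)) * ((a2 * b1) + (a3 * b1))) +
  59448 * (((a2 * b1) + (-1) * (a3 * b2)) * ((a2 * b1) + (-1) * (a3 * b2))) +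
  7255 * (((a2 * b1) + (-1) * (a3 * b3)) * ((a2 * b1) + (-1) * (a3 * b3))) +
  15438 * (((a2 * b2) + (-1) * (a2 * b3)) * ((a2 * b2) + (-1) * (a2 * b3))) +
  144954 * (((a2 * b2) + (a3 * b0)) * ((a2 * b2) + (a3 * b0))) +
  24978 * (((a2 * b2) + (-1) * (a3 * b1)) * ((a2 * b2) + (-1) * (a3 * b1))) +
  21802 * (((a2 * b2) + (a3 * b2)) * ((a2 * b2) + (a3 * b2))) +
  320334 * (((a2 * b2) + (-1) * (a3 * b3)) * ((a2 * b2) + (-1) * (a3 * b3))) +
  5831 * (((a2 * b3) + (a3 * b0)) * ((a2 * b3) + (a3 * b0))) +
  54803 * (((a2 * b3) + (-1) * (a3 * b1)) * ((a2 * b3) + (-1) * (a3 * b1))) +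
  54370 * (((a2 * b3) + (a3 * b2)) * ((a2 * b3) + (a3 * b2))) +
  99112 * (((a2 * b3) + (-1) * (a3 * b3)) * ((a2 * b3) + (-1) * (a3 * b3))) +
  13676 * (((a3 * b0) + (a3 * b1)) * ((a3 * b0) + (a3 * b1))) +
  37695 * (((a3 * b0) + (a3 * b2)) * ((a3 * b0) + (a3 * b2))) +
  97166 * (((a3 * b0) + (a3 * b3)) * ((a3 * b0) + (a3 * b3))) +
  10481 * (((a3 * b1) + (-1) * (a3 * b2)) * ((a3 * b1) + (-1) * (a3 * b2))) +
  13394 * (((a3 * b1) + (a3 * b3)) * ((a3 * b1) + (a3 * b3))) +
  102920 * (((a3 * b2) + (-1) * (a3 * b3)) * ((a3 * b2) + (-1) * (a3 * b3))) +
  3339690 * (((a0 * b0)) * ((a0 * b0))) +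
  4173605 * (((a0 * b1)) * ((a0 * b1))) +
  4494722 * (((a0 * b2)) * ((a0 * b2))) +
  4515244 * (((a0 * b3)) * ((a0 * b3))) +
  4143933 * (((a1 * b0)) * ((a1 * b0))) +
  3284463 * (((a1 * b1)) * ((a1 * b1))) +
  4476968 * (((a1 * b2)) * ((a1 * b2))) +
  4246055 * (((a1 * b3)) * ((a1 * b3))) +
  4438931 * (((a2 * b0)) * ((a2 * b0))) +
  4451168 * (((a2 * b1)) * ((a2 * b1))) +
  3033843 * (((a2 * b2)) * ((a2 * b2))) +
  4468083 * (((a2 * b3)) * ((a2 * b3))) +
  4240918 * (((a3 * b0)) * ((a3 * b0))) +
  4734136 * (((a3 * b1)) * ((a3 * b1))) +
  4428830 * (((a3 * b2)) * ((a3 * b2))) +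
  3060193 * (((a3 * b3)) * ((a3 * b3)))) by ring.
rewrite H1 H2 H3 H4 H5 H6 in Hid.
pose proof (sqnn (269435 * (a0 * b0) + (-34146) * (a0 * b1) + (-5567) * (a0 * b2) + 73858 * (a0 * b3) + (-34146) * (a1 * b0) + 301810 * (a1 * b1) + 26938 * (a1 * b2) + 59465 * (a1 * b3) + (-5567) * (a2 * b0) + 26938 * (a2 * b1) + 281991 * (a2 * b2) + 7245 * (a2 * b3) + 73858 * (a3 * b0) + 59465 * (a3 * b1) + 7245 * (a3 * b2) + 300912 * (a3 * b3))) as N0.
set (s0 := (269435 * (a0 * b0) + (-34146) * (a0 * b1) + (-5567) * (a0 * b2) + 73858 * (a0 * b3) + (-34146) * (a1 * b0) + 301810 * (a1 * b1) + 26938 * (a1 * b2) + 59465 * (a1 * b3) + (-5567) * (a2 * b0) + 26938 * (a2 * b1) + 281991 * (a2 * b2) + 7245 * (a2 * b3) + 73858 * (a3 * b0) + 59465 * (a3 * b1) + 7245 * (a3 * b2) + 300912 * (a3 * b3)) * (269435 * (a0 * b0) + (-34146) * (a0 * b1) + (-5567) * (a0 * b2) + 73858 * (a0 * b3) + (-34146) * (a1 * b0) + 301810 * (a1 * b1) + 26938 * (a1 * b2) + 59465 * (a1 * b3) + (-5567) * (a2 * b0) + 26938 * (a2 * b1) + 281991 * (a2 * b2) + 7245 * (a2 * b3) + 73858 * (a3 * b0) + 59465 * (a3 * b1) + 7245 * (a3 * b2) + 300912 * (a3 * b3))) in *.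
pose proof (sqnn (105967 * (a0 * b1) + 9530 * (a0 * b2) + (-17723) * (a0 * b3) + 104901 * (a1 * b0) + 38743 * (a1 * b1) + 8397 * (a1 * b2) + (-32562) * (a1 * b3) + 10870 * (a2 * b0) + 8680 * (a2 * b1) + 84967 * (a2 * b2) + (-27892) * (a2 * b3) + (-17931) * (a3 * b0) + (-33685) * (a3 * b1) + (-26476) * (a3 * b2) + 95905 * (a3 * b3))) as N1.
set (s1 := (105967 * (a0 * b1) + 9530 * (a0 * b2) + (-17723) * (a0 * b3) + 104901 * (a1 * b0) + 38743 * (a1 * b1) + 8397 * (a1 * b2) + (-32562) * (a1 * b3) + 10870 * (a2 * b0) + 8680 * (a2 * b1) + 84967 * (a2 * b2) + (-27892) * (a2 * b3) + (-17931) * (a3 * b0) + (-33685) * (a3 * b1) + (-26476) * (a3 * b2) + 95905 * (a3 * b3)) * (105967 * (a0 * b1) + 9530 * (a0 * b2) + (-17723) * (a0 * b3) + 104901 * (a1 * b0) + 38743 * (a1 * b1) + 8397 * (a1 * b2) + (-32562) * (a1 * b3) + 10870 * (a2 * b0) + 8680 * (a2 * b1) + 84967 * (a2 * b2) + (-27892) * (a2 * b3) + (-17931) * (a3 * b0) + (-33685) * (a3 * b1) + (-26476) * (a3 * b2) + 95905 * (a3 * b3))) in *.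
pose proof (sqnn (94198 * (a0 * b2) + (-28875) * (a0 * b3) + 1615 * (a1 * b0) + (-33536) * (a1 * b1) + 51699 * (a1 * b2) + (-25750) * (a1 * b3) + 91164 * (a2 * b0) + 51936 * (a2 * b1) + (-71550) * (a2 * b2) + (-55382) * (a2 * b3) + (-30467) * (a3 * b0) + (-24363) * (a3 * b1) + (-57404) * (a3 * b2) + 7444 * (a3 * b3))) as N2.
set (s2 := (94198 * (a0 * b2) + (-28875) * (a0 * b3) + 1615 * (a1 * b0) + (-33536) * (a1 * b1) + 51699 * (a1 * b2) + (-25750) * (a1 * b3) + 91164 * (a2 * b0) + 51936 * (a2 * b1) + (-71550) * (a2 * b2) + (-55382) * (a2 * b3) + (-30467) * (a3 * b0) + (-24363) * (a3 * b1) + (-57404) * (a3 * b2) + 7444 * (a3 * b3)) * (94198 * (a0 * b2) + (-28875) * (a0 * b3) + 1615 * (a1 * b0) + (-33536) * (a1 * b1) + 51699 * (a1 * b2) + (-25750) * (a1 * b3) + 91164 * (a2 * b0) + 51936 * (a2 * b1) + (-71550) * (a2 * b2) + (-55382) * (a2 * b3) + (-30467) * (a3 * b0) + (-24363) * (a3 * b1) + (-57404) * (a3 * b2) + 7444 * (a3 * b3))) in *.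
pose proof (sqnn (52840 * (a0 * b3) + 109 * (a1 * b0) + 60714 * (a1 * b1) + (-62092) * (a1 * b2) + (-9702) * (a1 * b3) + (-4085) * (a2 * b0) + (-59294) * (a2 * b1) + 80157 * (a2 * b2) + 35417 * (a2 * b3) + 44879 * (a3 * b0) + (-10985) * (a3 * b1) + 35922 * (a3 * b2) + 49013 * (a3 * b3))) as N3.
set (s3 := (52840 * (a0 * b3) + 109 * (a1 * b0) + 60714 * (a1 * b1) + (-62092) * (a1 * b2) + (-9702) * (a1 * b3) + (-4085) * (a2 * b0) + (-59294) * (a2 * b1) + 80157 * (a2 * b2) + 35417 * (a2 * b3) + 44879 * (a3 * b0) + (-10985) * (a3 * b1) + 35922 * (a3 * b2) + 49013 * (a3 * b3)) * (52840 * (a0 * b3) + 109 * (a1 * b0) + 60714 * (a1 * b1) + (-62092) * (a1 * b2) + (-9702) * (a1 * b3) + (-4085) * (a2 * b0) + (-59294) * (a2 * b1) + 80157 * (a2 * b2) + 35417 * (a2 * b3) + 44879 * (a3 * b0) + (-10985) * (a3 * b1) + 35922 * (a3 * b2) + 49013 * (a3 * b3))) in *.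
pose proof (sqnn (14908 * (a1 * b0) + 5962 * (a1 * b1) + (-2536) * (a1 * b2) + (-7451) * (a1 * b3) + (-18596) * (a2 * b0) + (-6587) * (a2 * b1) + 13246 * (a2 * b2) + 13810 * (a2 * b3) + 3167 * (a3 * b0) + 8293 * (a3 * b1) + (-5998) * (a3 * b2) + 5696 * (a3 * b3))) as N4.
set (s4 := (14908 * (a1 * b0) + 5962 * (a1 * b1) + (-2536) * (a1 * b2) + (-7451) * (a1 * b3) + (-18596) * (a2 * b0) + (-6587) * (a2 * b1) + 13246 * (a2 * b2) + 13810 * (a2 * b3) + 3167 * (a3 * b0) + 8293 * (a3 * b1) + (-5998) * (a3 * b2) + 5696 * (a3 * b3)) * (14908 * (a1 * b0) + 5962 * (a1 * b1) + (-2536) * (a1 * b2) + (-7451) * (a1 * b3) + (-18596) * (a2 * b0) + (-6587) * (a2 * b1) + 13246 * (a2 * b2) + 13810 * (a2 * b3) + 3167 * (a3 * b0) + 8293 * (a3 * b1) + (-5998) * (a3 * b2) + 5696 * (a3 * b3))) in *.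
pose proof (sqnn (39478 * (a1 * b1) + 16802 * (a1 * b2) + (-10532) * (a1 * b3) + 5199 * (a2 * b0) + 13034 * (a2 * b1) + 28308 * (a2 * b2) + 11377 * (a2 * b3) + 10616 * (a3 * b0) + (-8654) * (a3 * b1) + 10484 * (a3 * b2) + 59610 * (a3 * b3))) as N5.
set (s5 := (39478 * (a1 * b1) + 16802 * (a1 * b2) + (-10532) * (a1 * b3) + 5199 * (a2 * b0) + 13034 * (a2 * b1) + 28308 * (a2 * b2) + 11377 * (a2 * b3) + 10616 * (a3 * b0) + (-8654) * (a3 * b1) + 10484 * (a3 * b2) + 59610 * (a3 * b3)) * (39478 * (a1 * b1) + 16802 * (a1 * b2) + (-10532) * (a1 * b3) + 5199 * (a2 * b0) + 13034 * (a2 * b1) + 28308 * (a2 * b2) + 11377 * (a2 * b3) + 10616 * (a3 * b0) + (-8654) * (a3 * b1) + 10484 * (a3 * b2) + 59610 * (a3 * b3))) in *.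
pose proof (sqnn (19540 * (a1 * b2) + 8111 * (a1 * b3) + (-11134) * (a2 * b0) + 27481 * (a2 * b1) + (-3863) * (a2 * b2) + (-10426) * (a2 * b3) + (-22752) * (a3 * b0) + 4087 * (a3 * b1) + (-8492) * (a3 * b2) + 9932 * (a3 * b3))) as N6.
set (s6 := (19540 * (a1 * b2) + 8111 * (a1 * b3) + (-11134) * (a2 * b0) + 27481 * (a2 * b1) + (-3863) * (a2 * b2) + (-10426) * (a2 * b3) + (-22752) * (a3 * b0) + 4087 * (a3 * b1) + (-8492) * (a3 * b2) + 9932 * (a3 * b3)) * (19540 * (a1 * b2) + 8111 * (a1 * b3) + (-11134) * (a2 * b0) + 27481 * (a2 * b1) + (-3863) * (a2 * b2) + (-10426) * (a2 * b3) + (-22752) * (a3 * b0) + 4087 * (a3 * b1) + (-8492) * (a3 * b2) + 9932 * (a3 * b3))) in *.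
pose proof (sqnn (22565 * (a1 * b3) + 2322 * (a2 * b0) + (-1631) * (a2 * b1) + 22621 * (a2 * b2) + (-31653) * (a2 * b3) + 4739 * (a3 * b0) + 23204 * (a3 * b1) + (-31997) * (a3 * b2) + (-623) * (a3 * b3))) as N7.
set (s7 := (22565 * (a1 * b3) + 2322 * (a2 * b0) + (-1631) * (a2 * b1) + 22621 * (a2 * b2) + (-31653) * (a2 * b3) + 4739 * (a3 * b0) + 23204 * (a3 * b1) + (-31997) * (a3 * b2) + (-623) * (a3 * b3)) * (22565 * (a1 * b3) + 2322 * (a2 * b0) + (-1631) * (a2 * b1) + 22621 * (a2 * b2) + (-31653) * (a2 * b3) + 4739 * (a3 * b0) + 23204 * (a3 * b1) + (-31997) * (a3 * b2) + (-623) * (a3 * b3))) in *.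
pose proof (sqnn (4014 * (a2 * b0) + (-439) * (a2 * b1) + 36 * (a2 * b2) + (-1968) * (a2 * b3) + 1572 * (a3 * b0) + (-701) * (a3 * b1) + (-307) * (a3 * b2) + 584 * (a3 * b3))) as N8.
set (s8 := (4014 * (a2 * b0) + (-439) * (a2 * b1) + 36 * (a2 * b2) + (-1968) * (a2 * b3) + 1572 * (a3 * b0) + (-701) * (a3 * b1) + (-307) * (a3 * b2) + 584 * (a3 * b3)) * (4014 * (a2 * b0) + (-439) * (a2 * b1) + 36 * (a2 * b2) + (-1968) * (a2 * b3) + 1572 * (a3 * b0) + (-701) * (a3 * b1) + (-307) * (a3 * b2) + 584 * (a3 * b3))) in *.
pose proof (sqnn (3085 * (a2 * b1) + (-1130) * (a2 * b2) + 2 * (a2 * b3) + (-2388) * (a3 * b0) + (-935) * (a3 * b1) + 612 * (a3 * b2) + 652 * (a3 * b3))) as N9.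
set (s9 := (3085 * (a2 * b1) + (-1130) * (a2 * b2) + 2 * (a2 * b3) + (-2388) * (a3 * b0) + (-935) * (a3 * b1) + 612 * (a3 * b2) + 652 * (a3 * b3)) * (3085 * (a2 * b1) + (-1130) * (a2 * b2) + 2 * (a2 * b3) + (-2388) * (a3 * b0) + (-935) * (a3 * b1) + 612 * (a3 * b2) + 652 * (a3 * b3))) in *.
pose proof (sqnn (2765 * (a2 * b2) + (-1367) * (a2 * b3) + 547 * (a3 * b0) + 1766 * (a3 * b1) + (-2078) * (a3 * b2) + 1177 * (a3 * b3))) as N10.
set (s10 := (2765 * (a2 * b2) + (-1367) * (a2 * b3) + 547 * (a3 * b0) + 1766 * (a3 * b1) + (-2078) * (a3 * b2) + 1177 * (a3 * b3)) * (2765 * (a2 * b2) + (-1367) * (a2 * b3) + 547 * (a3 * b0) + 1766 * (a3 * b1) + (-2078) * (a3 * b2) + 1177 * (a3 * b3))) in *.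
pose proof (sqnn (2547 * (a2 * b3) + 32 * (a3 * b0) + (-971) * (a3 * b1) + 1712 * (a3 * b2) + 427 * (a3 * b3))) as N11.
set (s11 := (2547 * (a2 * b3) + 32 * (a3 * b0) + (-971) * (a3 * b1) + 1712 * (a3 * b2) + 427 * (a3 * b3)) * (2547 * (a2 * b3) + 32 * (a3 * b0) + (-971) * (a3 * b1) + 1712 * (a3 * b2) + 427 * (a3 * b3))) in *.
pose proof (sqnn (2176 * (a3 * b0) + 601 * (a3 * b1) + (-829) * (a3 * b2) + 3 * (a3 * b3))) as N12.
set (s12 := (2176 * (a3 * b0) + 601 * (a3 * b1) + (-829) * (a3 * b2) + 3 * (a3 * b3)) * (2176 * (a3 * b0) + 601 * (a3 * b1) + (-829) * (a3 * b2) + 3 * (a3 * b3))) in *.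
pose proof (sqnn (2322 * (a3 * b1) + (-1191) * (a3 * b2) + (-678) * (a3 * b3))) as N13.
set (s13 := (2322 * (a3 * b1) + (-1191) * (a3 * b2) + (-678) * (a3 * b3)) * (2322 * (a3 * b1) + (-1191) * (a3 * b2) + (-678) * (a3 * b3))) in *.
pose proof (sqnn (2058 * (a3 * b2) + 77 * (a3 * b3))) as N14.
set (s14 := (2058 * (a3 * b2) + 77 * (a3 * b3)) * (2058 * (a3 * b2) + 77 * (a3 * b3))) in *.
pose proof (sqnn (2047 * (a3 * b3))) as N15.
set (s15 := (2047 * (a3 * b3)) * (2047 * (a3 * b3))) in *.
pose proof (sqnn ((a0 * b0) + (a0 * b1))) as P0.
set (q0 := ((a0 * b0) + (a0 * b1)) * ((a0 * b0) + (a0 * b1))) in *.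
pose proof (sqnn ((a0 * b0) + (-1) * (a0 * b2))) as P1.
set (q1 := ((a0 * b0) + (-1) * (a0 * b2)) * ((a0 * b0) + (-1) * (a0 * b2))) in *.
pose proof (sqnn ((a0 * b0) + (a0 * b3))) as P2.
set (q2 := ((a0 * b0) + (a0 * b3)) * ((a0 * b0) + (a0 * b3))) in *.
pose proof (sqnn ((a0 * b0) + (a1 * b0))) as P3.
set (q3 := ((a0 * b0) + (a1 * b0)) * ((a0 * b0) + (a1 * b0))) in *.
pose proof (sqnn ((a0 * b0) + (-1) * (a1 * b1))) as P4.
set (q4 := ((a0 * b0) + (-1) * (a1 * b1)) * ((a0 * b0) + (-1) * (a1 * b1))) in *.
pose proof (sqnn ((a0 * b0) + (-1) * (a1 * b2))) as P5.
set (q5 := ((a0 * b0) + (-1) * (a1 * b2)) * ((a0 * b0) + (-1) * (a1 * b2))) in *.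
pose proof (sqnn ((a0 * b0) + (a1 * b3))) as P6.
set (q6 := ((a0 * b0) + (a1 * b3)) * ((a0 * b0) + (a1 * b3))) in *.
pose proof (sqnn ((a0 * b0) + (-1) * (a2 * b0))) as P7.
set (q7 := ((a0 * b0) + (-1) * (a2 * b0)) * ((a0 * b0) + (-1) * (a2 * b0))) in *.
pose proof (sqnn ((a0 * b0) + (-1) * (a2 * b1))) as P8.
set (q8 := ((a0 * b0) + (-1) * (a2 * b1)) * ((a0 * b0) + (-1) * (a2 * b1))) in *.
pose proof (sqnn ((a0 * b0) + (-1) * (a2 * b2))) as P9.
set (q9 := ((a0 * b0) + (-1) * (a2 * b2)) * ((a0 * b0) + (-1) * (a2 * b2))) in *.
pose proof (sqnn ((a0 * b0) + (-1) * (a2 * b3))) as P10.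
set (q10 := ((a0 * b0) + (-1) * (a2 * b3)) * ((a0 * b0) + (-1) * (a2 * b3))) in *.
pose proof (sqnn ((a0 * b0) + (a3 * b0))) as P11.
set (q11 := ((a0 * b0) + (a3 * b0)) * ((a0 * b0) + (a3 * b0))) in *.
pose proof (sqnn ((a0 * b0) + (a3 * b1))) as P12.
set (q12 := ((a0 * b0) + (a3 * b1)) * ((a0 * b0) + (a3 * b1))) in *.
pose proof (sqnn ((a0 * b0) + (-1) * (a3 * b2))) as P13.
set (q13 := ((a0 * b0) + (-1) * (a3 * b2)) * ((a0 * b0) + (-1) * (a3 * b2))) in *.
pose proof (sqnn ((a0 * b0) + (-1) * (a3 * b3))) as P14.
set (q14 := ((a0 * b0) + (-1) * (a3 * b3)) * ((a0 * b0) + (-1) * (a3 * b3))) in *.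
pose proof (sqnn ((a0 * b1) + (a0 * b2))) as P15.
set (q15 := ((a0 * b1) + (a0 * b2)) * ((a0 * b1) + (a0 * b2))) in *.
pose proof (sqnn ((a0 * b1) + (a0 * b3))) as P16.
set (q16 := ((a0 * b1) + (a0 * b3)) * ((a0 * b1) + (a0 * b3))) in *.
pose proof (sqnn ((a0 * b1) + (a1 * b0))) as P17.
set (q17 := ((a0 * b1) + (a1 * b0)) * ((a0 * b1) + (a1 * b0))) in *.
pose proof (sqnn ((a0 * b1) + (a1 * b1))) as P18.
set (q18 := ((a0 * b1) + (a1 * b1)) * ((a0 * b1) + (a1 * b1))) in *.
pose proof (sqnn ((a0 * b1) + (a1 * b2))) as P19.
set (q19 := ((a0 * b1) + (a1 * b2)) * ((a0 * b1) + (a1 * b2))) in *.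
pose proof (sqnn ((a0 * b1) + (-1) * (a1 * b3))) as P20.
set (q20 := ((a0 * b1) + (-1) * (a1 * b3)) * ((a0 * b1) + (-1) * (a1 * b3))) in *.
pose proof (sqnn ((a0 * b1) + (a2 * b0))) as P21.
set (q21 := ((a0 * b1) + (a2 * b0)) * ((a0 * b1) + (a2 * b0))) in *.
pose proof (sqnn ((a0 * b1) + (a2 * b1))) as P22.
set (q22 := ((a0 * b1) + (a2 * b1)) * ((a0 * b1) + (a2 * b1))) in *.
pose proof (sqnn ((a0 * b1) + (a2 * b2))) as P23.
set (q23 := ((a0 * b1) + (a2 * b2)) * ((a0 * b1) + (a2 * b2))) in *.
pose proof (sqnn ((a0 * b1) + (a2 * b3))) as P24.
set (q24 := ((a0 * b1) + (a2 * b3)) * ((a0 * b1) + (a2 * b3))) in *.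
pose proof (sqnn ((a0 * b1) + (a3 * b0))) as P25.
set (q25 := ((a0 * b1) + (a3 * b0)) * ((a0 * b1) + (a3 * b0))) in *.
pose proof (sqnn ((a0 * b1) + (-1) * (a3 * b1))) as P26.
set (q26 := ((a0 * b1) + (-1) * (a3 * b1)) * ((a0 * b1) + (-1) * (a3 * b1))) in *.
pose proof (sqnn ((a0 * b1) + (-1) * (a3 * b2))) as P27.
set (q27 := ((a0 * b1) + (-1) * (a3 * b2)) * ((a0 * b1) + (-1) * (a3 * b2))) in *.
pose proof (sqnn ((a0 * b1) + (a3 * b3))) as P28.
set (q28 := ((a0 * b1) + (a3 * b3)) * ((a0 * b1) + (a3 * b3))) in *.
pose proof (sqnn ((a0 * b2) + (a0 * b3))) as P29.
set (q29 := ((a0 * b2) + (a0 * b3)) * ((a0 * b2) + (a0 * b3))) in *.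
pose proof (sqnn ((a0 * b2) + (a1 * b0))) as P30.
set (q30 := ((a0 * b2) + (a1 * b0)) * ((a0 * b2) + (a1 * b0))) in *.
pose proof (sqnn ((a0 * b2) + (-1) * (a1 * b1))) as P31.
set (q31 := ((a0 * b2) + (-1) * (a1 * b1)) * ((a0 * b2) + (-1) * (a1 * b1))) in *.
pose proof (sqnn ((a0 * b2) + (-1) * (a1 * b2))) as P32.
set (q32 := ((a0 * b2) + (-1) * (a1 * b2)) * ((a0 * b2) + (-1) * (a1 * b2))) in *.
pose proof (sqnn ((a0 * b2) + (-1) * (a1 * b3))) as P33.
set (q33 := ((a0 * b2) + (-1) * (a1 * b3)) * ((a0 * b2) + (-1) * (a1 * b3))) in *.
pose proof (sqnn ((a0 * b2) + (-1) * (a2 * b0))) as P34.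
set (q34 := ((a0 * b2) + (-1) * (a2 * b0)) * ((a0 * b2) + (-1) * (a2 * b0))) in *.
pose proof (sqnn ((a0 * b2) + (-1) * (a2 * b1))) as P35.
set (q35 := ((a0 * b2) + (-1) * (a2 * b1)) * ((a0 * b2) + (-1) * (a2 * b1))) in *.
pose proof (sqnn ((a0 * b2) + (-1) * (a2 * b2))) as P36.
set (q36 := ((a0 * b2) + (-1) * (a2 * b2)) * ((a0 * b2) + (-1) * (a2 * b2))) in *.
pose proof (sqnn ((a0 * b2) + (a2 * b3))) as P37.
set (q37 := ((a0 * b2) + (a2 * b3)) * ((a0 * b2) + (a2 * b3))) in *.
pose proof (sqnn ((a0 * b2) + (-1) * (a3 * b0))) as P38.
set (q38 := ((a0 * b2) + (-1) * (a3 * b0)) * ((a0 * b2) + (-1) * (a3 * b0))) in *.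
pose proof (sqnn ((a0 * b2) + (a3 * b1))) as P39.
set (q39 := ((a0 * b2) + (a3 * b1)) * ((a0 * b2) + (a3 * b1))) in *.
pose proof (sqnn ((a0 * b2) + (-1) * (a3 * b2))) as P40.
set (q40 := ((a0 * b2) + (-1) * (a3 * b2)) * ((a0 * b2) + (-1) * (a3 * b2))) in *.
pose proof (sqnn ((a0 * b2) + (-1) * (a3 * b3))) as P41.
set (q41 := ((a0 * b2) + (-1) * (a3 * b3)) * ((a0 * b2) + (-1) * (a3 * b3))) in *.
pose proof (sqnn ((a0 * b3) + (-1) * (a1 * b0))) as P42.
set (q42 := ((a0 * b3) + (-1) * (a1 * b0)) * ((a0 * b3) + (-1) * (a1 * b0))) in *.
pose proof (sqnn ((a0 * b3) + (a1 * b1))) as P43.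
set (q43 := ((a0 * b3) + (a1 * b1)) * ((a0 * b3) + (a1 * b1))) in *.
pose proof (sqnn ((a0 * b3) + (-1) * (a1 * b2))) as P44.
set (q44 := ((a0 * b3) + (-1) * (a1 * b2)) * ((a0 * b3) + (-1) * (a1 * b2))) in *.
pose proof (sqnn ((a0 * b3) + (a1 * b3))) as P45.
set (q45 := ((a0 * b3) + (a1 * b3)) * ((a0 * b3) + (a1 * b3))) in *.
pose proof (sqnn ((a0 * b3) + (a2 * b0))) as P46.
set (q46 := ((a0 * b3) + (a2 * b0)) * ((a0 * b3) + (a2 * b0))) in *.
pose proof (sqnn ((a0 * b3) + (-1) * (a2 * b1))) as P47.
set (q47 := ((a0 * b3) + (-1) * (a2 * b1)) * ((a0 * b3) + (-1) * (a2 * b1))) in *.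
pose proof (sqnn ((a0 * b3) + (a2 * b2))) as P48.
set (q48 := ((a0 * b3) + (a2 * b2)) * ((a0 * b3) + (a2 * b2))) in *.
pose proof (sqnn ((a0 * b3) + (-1) * (a2 * b3))) as P49.
set (q49 := ((a0 * b3) + (-1) * (a2 * b3)) * ((a0 * b3) + (-1) * (a2 * b3))) in *.
pose proof (sqnn ((a0 * b3) + (a3 * b0))) as P50.
set (q50 := ((a0 * b3) + (a3 * b0)) * ((a0 * b3) + (a3 * b0))) in *.
pose proof (sqnn ((a0 * b3) + (a3 * b1))) as P51.
set (q51 := ((a0 * b3) + (a3 * b1)) * ((a0 * b3) + (a3 * b1))) in *.
pose proof (sqnn ((a0 * b3) + (a3 * b2))) as P52.
set (q52 := ((a0 * b3) + (a3 * b2)) * ((a0 * b3) + (a3 * b2))) in *.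
pose proof (sqnn ((a0 * b3) + (a3 * b3))) as P53.
set (q53 := ((a0 * b3) + (a3 * b3)) * ((a0 * b3) + (a3 * b3))) in *.
pose proof (sqnn ((a1 * b0) + (a1 * b1))) as P54.
set (q54 := ((a1 * b0) + (a1 * b1)) * ((a1 * b0) + (a1 * b1))) in *.
pose proof (sqnn ((a1 * b0) + (a1 * b2))) as P55.
set (q55 := ((a1 * b0) + (a1 * b2)) * ((a1 * b0) + (a1 * b2))) in *.
pose proof (sqnn ((a1 * b0) + (a1 * b3))) as P56.
set (q56 := ((a1 * b0) + (a1 * b3)) * ((a1 * b0) + (a1 * b3))) in *.
pose proof (sqnn ((a1 * b0) + (a2 * b0))) as P57.
set (q57 := ((a1 * b0) + (a2 * b0)) * ((a1 * b0) + (a2 * b0))) in *.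
pose proof (sqnn ((a1 * b0) + (a2 * b1))) as P58.
set (q58 := ((a1 * b0) + (a2 * b1)) * ((a1 * b0) + (a2 * b1))) in *.
pose proof (sqnn ((a1 * b0) + (a2 * b2))) as P59.
set (q59 := ((a1 * b0) + (a2 * b2)) * ((a1 * b0) + (a2 * b2))) in *.
pose proof (sqnn ((a1 * b0) + (-1) * (a2 * b3))) as P60.
set (q60 := ((a1 * b0) + (-1) * (a2 * b3)) * ((a1 * b0) + (-1) * (a2 * b3))) in *.
pose proof (sqnn ((a1 * b0) + (a3 * b0))) as P61.
set (q61 := ((a1 * b0) + (a3 * b0)) * ((a1 * b0) + (a3 * b0))) in *.
pose proof (sqnn ((a1 * b0) + (-1) * (a3 * b1))) as P62.
set (q62 := ((a1 * b0) + (-1) * (a3 * b1)) * ((a1 * b0) + (-1) * (a3 * b1))) in *.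
pose proof (sqnn ((a1 * b0) + (-1) * (a3 * b2))) as P63.
set (q63 := ((a1 * b0) + (-1) * (a3 * b2)) * ((a1 * b0) + (-1) * (a3 * b2))) in *.
pose proof (sqnn ((a1 * b0) + (a3 * b3))) as P64.
set (q64 := ((a1 * b0) + (a3 * b3)) * ((a1 * b0) + (a3 * b3))) in *.
pose proof (sqnn ((a1 * b1) + (-1) * (a1 * b2))) as P65.
set (q65 := ((a1 * b1) + (-1) * (a1 * b2)) * ((a1 * b1) + (-1) * (a1 * b2))) in *.
pose proof (sqnn ((a1 * b1) + (a1 * b3))) as P66.
set (q66 := ((a1 * b1) + (a1 * b3)) * ((a1 * b1) + (a1 * b3))) in *.
pose proof (sqnn ((a1 * b1) + (-1) * (a2 * b0))) as P67.
set (q67 := ((a1 * b1) + (-1) * (a2 * b0)) * ((a1 * b1) + (-1) * (a2 * b0))) in *.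
pose proof (sqnn ((a1 * b1) + (-1) * (a2 * b1))) as P68.
set (q68 := ((a1 * b1) + (-1) * (a2 * b1)) * ((a1 * b1) + (-1) * (a2 * b1))) in *.
pose proof (sqnn ((a1 * b1) + (-1) * (a2 * b2))) as P69.
set (q69 := ((a1 * b1) + (-1) * (a2 * b2)) * ((a1 * b1) + (-1) * (a2 * b2))) in *.
pose proof (sqnn ((a1 * b1) + (-1) * (a2 * b3))) as P70.
set (q70 := ((a1 * b1) + (-1) * (a2 * b3)) * ((a1 * b1) + (-1) * (a2 * b3))) in *.
pose proof (sqnn ((a1 * b1) + (a3 * b0))) as P71.
set (q71 := ((a1 * b1) + (a3 * b0)) * ((a1 * b1) + (a3 * b0))) in *.
pose proof (sqnn ((a1 * b1) + (a3 * b1))) as P72.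
set (q72 := ((a1 * b1) + (a3 * b1)) * ((a1 * b1) + (a3 * b1))) in *.
pose proof (sqnn ((a1 * b1) + (-1) * (a3 * b2))) as P73.
set (q73 := ((a1 * b1) + (-1) * (a3 * b2)) * ((a1 * b1) + (-1) * (a3 * b2))) in *.
pose proof (sqnn ((a1 * b1) + (-1) * (a3 * b3))) as P74.
set (q74 := ((a1 * b1) + (-1) * (a3 * b3)) * ((a1 * b1) + (-1) * (a3 * b3))) in *.
pose proof (sqnn ((a1 * b2) + (-1) * (a1 * b3))) as P75.
set (q75 := ((a1 * b2) + (-1) * (a1 * b3)) * ((a1 * b2) + (-1) * (a1 * b3))) in *.
pose proof (sqnn ((a1 * b2) + (a2 * b0))) as P76.
set (q76 := ((a1 * b2) + (a2 * b0)) * ((a1 * b2) + (a2 * b0))) in *.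
pose proof (sqnn ((a1 * b2) + (a2 * b1))) as P77.
set (q77 := ((a1 * b2) + (a2 * b1)) * ((a1 * b2) + (a2 * b1))) in *.
pose proof (sqnn ((a1 * b2) + (-1) * (a2 * b2))) as P78.
set (q78 := ((a1 * b2) + (-1) * (a2 * b2)) * ((a1 * b2) + (-1) * (a2 * b2))) in *.
pose proof (sqnn ((a1 * b2) + (-1) * (a2 * b3))) as P79.
set (q79 := ((a1 * b2) + (-1) * (a2 * b3)) * ((a1 * b2) + (-1) * (a2 * b3))) in *.
pose proof (sqnn ((a1 * b2) + (-1) * (a3 * b0))) as P80.
set (q80 := ((a1 * b2) + (-1) * (a3 * b0)) * ((a1 * b2) + (-1) * (a3 * b0))) in *.
pose proof (sqnn ((a1 * b2) + (a3 * b1))) as P81.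
set (q81 := ((a1 * b2) + (a3 * b1)) * ((a1 * b2) + (a3 * b1))) in *.
pose proof (sqnn ((a1 * b2) + (-1) * (a3 * b2))) as P82.
set (q82 := ((a1 * b2) + (-1) * (a3 * b2)) * ((a1 * b2) + (-1) * (a3 * b2))) in *.
pose proof (sqnn ((a1 * b2) + (-1) * (a3 * b3))) as P83.
set (q83 := ((a1 * b2) + (-1) * (a3 * b3)) * ((a1 * b2) + (-1) * (a3 * b3))) in *.
pose proof (sqnn ((a1 * b3) + (-1) * (a2 * b0))) as P84.
set (q84 := ((a1 * b3) + (-1) * (a2 * b0)) * ((a1 * b3) + (-1) * (a2 * b0))) in *.
pose proof (sqnn ((a1 * b3) + (-1) * (a2 * b1))) as P85.
set (q85 := ((a1 * b3) + (-1) * (a2 * b1)) * ((a1 * b3) + (-1) * (a2 * b1))) in *.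
pose proof (sqnn ((a1 * b3) + (a2 * b2))) as P86.
set (q86 := ((a1 * b3) + (a2 * b2)) * ((a1 * b3) + (a2 * b2))) in *.
pose proof (sqnn ((a1 * b3) + (a2 * b3))) as P87.
set (q87 := ((a1 * b3) + (a2 * b3)) * ((a1 * b3) + (a2 * b3))) in *.
pose proof (sqnn ((a1 * b3) + (a3 * b0))) as P88.
set (q88 := ((a1 * b3) + (a3 * b0)) * ((a1 * b3) + (a3 * b0))) in *.
pose proof (sqnn ((a1 * b3) + (a3 * b1))) as P89.
set (q89 := ((a1 * b3) + (a3 * b1)) * ((a1 * b3) + (a3 * b1))) in *.
pose proof (sqnn ((a1 * b3) + (a3 * b2))) as P90.
set (q90 := ((a1 * b3) + (a3 * b2)) * ((a1 * b3) + (a3 * b2))) in *.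
pose proof (sqnn ((a1 * b3) + (a3 * b3))) as P91.
set (q91 := ((a1 * b3) + (a3 * b3)) * ((a1 * b3) + (a3 * b3))) in *.
pose proof (sqnn ((a2 * b0) + (-1) * (a2 * b1))) as P92.
set (q92 := ((a2 * b0) + (-1) * (a2 * b1)) * ((a2 * b0) + (-1) * (a2 * b1))) in *.
pose proof (sqnn ((a2 * b0) + (-1) * (a2 * b2))) as P93.
set (q93 := ((a2 * b0) + (-1) * (a2 * b2)) * ((a2 * b0) + (-1) * (a2 * b2))) in *.
pose proof (sqnn ((a2 * b0) + (a2 * b3))) as P94.
set (q94 := ((a2 * b0) + (a2 * b3)) * ((a2 * b0) + (a2 * b3))) in *.
pose proof (sqnn ((a2 * b0) + (-1) * (a3 * b0))) as P95.
set (q95 := ((a2 * b0) + (-1) * (a3 * b0)) * ((a2 * b0) + (-1) * (a3 * b0))) in *.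
pose proof (sqnn ((a2 * b0) + (-1) * (a3 * b1))) as P96.
set (q96 := ((a2 * b0) + (-1) * (a3 * b1)) * ((a2 * b0) + (-1) * (a3 * b1))) in *.
pose proof (sqnn ((a2 * b0) + (-1) * (a3 * b2))) as P97.
set (q97 := ((a2 * b0) + (-1) * (a3 * b2)) * ((a2 * b0) + (-1) * (a3 * b2))) in *.
pose proof (sqnn ((a2 * b0) + (-1) * (a3 * b3))) as P98.
set (q98 := ((a2 * b0) + (-1) * (a3 * b3)) * ((a2 * b0) + (-1) * (a3 * b3))) in *.
pose proof (sqnn ((a2 * b1) + (-1) * (a2 * b2))) as P99.
set (q99 := ((a2 * b1) + (-1) * (a2 * b2)) * ((a2 * b1) + (-1) * (a2 * b2))) in *.
pose proof (sqnn ((a2 * b1) + (-1) * (a2 * b3))) as P100.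
set (q100 := ((a2 * b1) + (-1) * (a2 * b3)) * ((a2 * b1) + (-1) * (a2 * b3))) in *.
pose proof (sqnn ((a2 * b1) + (-1) * (a3 * b0))) as P101.
set (q101 := ((a2 * b1) + (-1) * (a3 * b0)) * ((a2 * b1) + (-1) * (a3 * b0))) in *.
pose proof (sqnn ((a2 * b1) + (a3 * b1))) as P102.
set (q102 := ((a2 * b1) + (a3 * b1)) * ((a2 * b1) + (a3 * b1))) in *.
pose proof (sqnn ((a2 * b1) + (-1) * (a3 * b2))) as P103.
set (q103 := ((a2 * b1) + (-1) * (a3 * b2)) * ((a2 * b1) + (-1) * (a3 * b2))) in *.
pose proof (sqnn ((a2 * b1) + (-1) * (a3 * b3))) as P104.
set (q104 := ((a2 * b1) + (-1) * (a3 * b3)) * ((a2 * b1) + (-1) * (a3 * b3))) in *.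
pose proof (sqnn ((a2 * b2) + (-1) * (a2 * b3))) as P105.
set (q105 := ((a2 * b2) + (-1) * (a2 * b3)) * ((a2 * b2) + (-1) * (a2 * b3))) in *.
pose proof (sqnn ((a2 * b2) + (a3 * b0))) as P106.
set (q106 := ((a2 * b2) + (a3 * b0)) * ((a2 * b2) + (a3 * b0))) in *.
pose proof (sqnn ((a2 * b2) + (-1) * (a3 * b1))) as P107.
set (q107 := ((a2 * b2) + (-1) * (a3 * b1)) * ((a2 * b2) + (-1) * (a3 * b1))) in *.
pose proof (sqnn ((a2 * b2) + (a3 * b2))) as P108.
set (q108 := ((a2 * b2) + (a3 * b2)) * ((a2 * b2) + (a3 * b2))) in *.
pose proof (sqnn ((a2 * b2) + (-1) * (a3 * b3))) as P109.
set (q109 := ((a2 * b2) + (-1) * (a3 * b3)) * ((a2 * b2) + (-1) * (a3 * b3))) in *.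
pose proof (sqnn ((a2 * b3) + (a3 * b0))) as P110.
set (q110 := ((a2 * b3) + (a3 * b0)) * ((a2 * b3) + (a3 * b0))) in *.
pose proof (sqnn ((a2 * b3) + (-1) * (a3 * b1))) as P111.
set (q111 := ((a2 * b3) + (-1) * (a3 * b1)) * ((a2 * b3) + (-1) * (a3 * b1))) in *.
pose proof (sqnn ((a2 * b3) + (a3 * b2))) as P112.
set (q112 := ((a2 * b3) + (a3 * b2)) * ((a2 * b3) + (a3 * b2))) in *.
pose proof (sqnn ((a2 * b3) + (-1) * (a3 * b3))) as P113.
set (q113 := ((a2 * b3) + (-1) * (a3 * b3)) * ((a2 * b3) + (-1) * (a3 * b3))) in *.
pose proof (sqnn ((a3 * b0) + (a3 * b1))) as P114.
set (q114 := ((a3 * b0) + (a3 * b1)) * ((a3 * b0) + (a3 * b1))) in *.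
pose proof (sqnn ((a3 * b0) + (a3 * b2))) as P115.
set (q115 := ((a3 * b0) + (a3 * b2)) * ((a3 * b0) + (a3 * b2))) in *.
pose proof (sqnn ((a3 * b0) + (a3 * b3))) as P116.
set (q116 := ((a3 * b0) + (a3 * b3)) * ((a3 * b0) + (a3 * b3))) in *.
pose proof (sqnn ((a3 * b1) + (-1) * (a3 * b2))) as P117.
set (q117 := ((a3 * b1) + (-1) * (a3 * b2)) * ((a3 * b1) + (-1) * (a3 * b2))) in *.
pose proof (sqnn ((a3 * b1) + (a3 * b3))) as P118.
set (q118 := ((a3 * b1) + (a3 * b3)) * ((a3 * b1) + (a3 * b3))) in *.
pose proof (sqnn ((a3 * b2) + (-1) * (a3 * b3))) as P119.
set (q119 := ((a3 * b2) + (-1) * (a3 * b3)) * ((a3 * b2) + (-1) * (a3 * b3))) in *.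
pose proof (sqnn ((a0 * b0))) as D0.
pose proof (sqnn ((a0 * b1))) as D1.
pose proof (sqnn ((a0 * b2))) as D2.
pose proof (sqnn ((a0 * b3))) as D3.
pose proof (sqnn ((a1 * b0))) as D4.
pose proof (sqnn ((a1 * b1))) as D5.
pose proof (sqnn ((a1 * b2))) as D6.
pose proof (sqnn ((a1 * b3))) as D7.
pose proof (sqnn ((a2 * b0))) as D8.
pose proof (sqnn ((a2 * b1))) as D9.
pose proof (sqnn ((a2 * b2))) as D10.
pose proof (sqnn ((a2 * b3))) as D11.
pose proof (sqnn ((a3 * b0))) as D12.
pose proof (sqnn ((a3 * b1))) as D13.
pose proof (sqnn ((a3 * b2))) as D14.
pose proof (sqnn ((a3 * b3))) as D15.
assert (Z : ((a0 * b0)) * ((a0 * b0)) = 0 /\ ((a0 * b1)) * ((a0 * b1)) = 0 /\ ((a0 * b2)) * ((a0 * b2)) = 0 /\ ((a0 * b3)) * ((a0 * b3)) = 0 /\ ((a1 * b0)) * ((a1 * b0)) = 0 /\ ((a1 * b1)) * ((a1 * b1)) = 0 /\ ((a1 * b2)) * ((a1 * b2)) = 0 /\ ((a1 * b3)) * ((a1 * b3)) = 0 /\ ((a2 * b0)) * ((a2 * b0)) = 0 /\ ((a2 * b1)) * ((a2 * b1)) = 0 /\ ((a2 * b2)) * ((a2 * b2)) = 0 /\ ((a2 * b3)) * ((a2 * b3)) = 0 /\ ((a3 * b0)) * ((a3 * b0)) = 0 /\ ((a3 * b1)) * ((a3 * b1)) = 0 /\ ((a3 * b2)) * ((a3 *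 b2)) = 0 /\ ((a3 * b3)) * ((a3 * b3)) = 0) by (repeat split; lra).
destruct Z as (Z0 & Z1 & Z2 & Z3 & Z4 & Z5 & Z6 & Z7 & Z8 & Z9 & Z10 & Z11 & Z12 & Z13 & Z14 & Z15); apply fin; apply sq0; assumption.
Qed.


Definition uval (i j : nat) : R :=
  match i, j with
  | 0%nat, 0%nat => 3
  | 0%nat, 1%nat => -2
  | 0%nat, 2%nat => -1
  | 0%nat, 3%nat => -1
  | 1%nat, 0%nat => -3
  | 1%nat, 1%nat => 2
  | 1%nat, 2%nat => -1
  | 1%nat, 3%nat => 0
  | 2%nat, 0%nat => 0
  | 2%nat, 1%nat => -1
  | 2%nat, 2%nat => 2
  | 2%nat, 3%nat => -1
  | 3%nat, 0%nat => 3
  | 3%nat, 1%nat => 2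
  | 3%nat, 2%nat => 2
  | 3%nat, 3%nat => -3
  | 4%nat, 0%nat => 2
  | 4%nat, 1%nat => 2
  | 4%nat, 2%nat => -3
  | 4%nat, 3%nat => -1
  | 5%nat, 0%nat => 0
  | 5%nat, 1%nat => 2
  | 5%nat, 2%nat => -2
  | 5%nat, 3%nat => -2
  | _, _ => 0
  end.

Definition d4 (a0 a1 a2 a3 b0 b1 b2 b3 : R) : R := a0*b0 + a1*b1 + a2*b2 + a3*b3.

Definition Ek (k : nat) (x0 x1 x2 x3 y0 y1 y2 y3 : R) : Prop :=
  d4 (uval k 0) (uval k 1) (uval k 2) (uval k 3) (uval k 0) (uval k 1) (uval k 2) (uval k 3) * d4 x0 x1 x2 x3 x0 x1 x2 x3
  - d4 x0 x1 x2 x3 (uval k 0) (uval k 1) (uval k 2) (uval k 3) * d4 x0 x1 x2 x3 (uval k 0) (uval k 1) (uval k 2) (uval k 3)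
  = d4 (uval k 0) (uval k 1) (uval k 2) (uval k 3) (uval k 0) (uval k 1) (uval k 2) (uval k 3) * d4 y0 y1 y2 y3 y0 y1 y2 y3
  - d4 y0 y1 y2 y3 (uval k 0) (uval k 1) (uval k 2) (uval k 3) * d4 y0 y1 y2 y3 (uval k 0) (uval k 1) (uval k 2) (uval k 3).

Lemma core_xy (x0 x1 x2 x3 y0 y1 y2 y3 : R) :
  Ek 0 x0 x1 x2 x3 y0 y1 y2 y3 -> Ek 1 x0 x1 x2 x3 y0 y1 y2 y3 -> Ek 2 x0 x1 x2 x3 y0 y1 y2 y3 ->
  Ek 3 x0 x1 x2 x3 y0 y1 y2 y3 -> Ek 4 x0 x1 x2 x3 y0 y1 y2 y3 -> Ek 5 x0 x1 x2 x3 y0 y1 y2 y3 ->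
  (x0 = y0 /\ x1 = y1 /\ x2 = y2 /\ x3 = y3) \/ (x0 = - y0 /\ x1 = - y1 /\ x2 = - y2 /\ x3 = - y3).
Proof.
unfold Ek, d4, uval. intros E0 E1 E2 E3 E4 E5.
assert (P0 : (6) * ((x0 - y0) * (x0 + y0)) + (6) * ((x0 - y0) * (x1 + y1)) + (3) * ((x0 - y0) * (x2 + y2)) + (3) * ((x0 - y0) * (x3 + y3)) + (6) * ((x1 - y1) * (x0 + y0)) + (11) * ((x1 - y1) * (x1 + y1)) + (-2) * ((x1 - y1) * (x2 + y2)) + (-2) * ((x1 - y1) * (x3 + y3)) + (3) * ((x2 - y2) * (x0 + y0)) + (-2) * ((x2 - y2) * (x1 + y1)) + (14) * ((x2 - y2) * (x2 + y2)) + (-1) * ((x2 - y2) * (x3 + y3)) + (3) * ((x3 - y3) * (x0 + y0)) + (-2) * ((x3 - y3) * (x1 + y1)) + (-1) * ((x3 - y3) * (x2 + y2)) + (14) * ((x3 - y3) * (x3 + y3)) = 0) by lra.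
assert (P1 : (5) * ((x0 - y0) * (x0 + y0)) + (6) * ((x0 - y0) * (x1 + y1)) + (-3) * ((x0 - y0) * (x2 + y2)) + (6) * ((x1 - y1) * (x0 + y0)) + (10) * ((x1 - y1) * (x1 + y1)) + (2) * ((x1 - y1) * (x2 + y2)) + (-3) * ((x2 - y2) * (x0 + y0)) + (2) * ((x2 - y2) * (x1 + y1)) + (13) * ((x2 - y2) * (x2 + y2)) + (14) * ((x3 - y3) * (x3 + y3)) = 0) by lra.
assert (P2 : (6) * ((x0 - y0) * (x0 + y0)) + (5) * ((x1 - y1) * (x1 + y1)) + (2) * ((x1 - y1) * (x2 + y2)) + (-1) * ((x1 - y1) * (x3 + y3)) + (2) * ((x2 - y2) * (x1 + y1)) + (2) * ((x2 - y2) * (x2 + y2)) + (2) * ((x2 - y2) * (x3 + y3)) + (-1) * ((x3 - y3) * (x1 + y1)) + (2) * ((x3 - y3) * (x2 + y2)) + (5) * ((x3 - y3) * (x3 + y3)) = 0) by lra.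
assert (P3 : (17) * ((x0 - y0) * (x0 + y0)) + (-6) * ((x0 - y0) * (x1 + y1)) + (-6) * ((x0 - y0) * (x2 + y2)) + (9) * ((x0 - y0) * (x3 + y3)) + (-6) * ((x1 - y1) * (x0 + y0)) + (22) * ((x1 - y1) * (x1 + y1)) + (-4) * ((x1 - y1) * (x2 + y2)) + (6) * ((x1 - y1) * (x3 + y3)) + (-6) * ((x2 - y2) * (x0 + y0)) + (-4) * ((x2 - y2) * (x1 + y1)) + (22) * ((x2 - y2) * (x2 + y2)) + (6) * ((x2 - y2) * (x3 + y3)) + (9) * ((x3 - y3) * (x0 + y0)) + (6) * ((x3 - y3) * (x1 + y1)) + (6) * ((x3 - y3) * (x2 + y2)) + (17) * ((x3 - y3) * (x3 + y3)) = 0) by lra.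
assert (P4 : (14) * ((x0 - y0) * (x0 + y0)) + (-4) * ((x0 - y0) * (x1 + y1)) + (6) * ((x0 - y0) * (x2 + y2)) + (2) * ((x0 - y0) * (x3 + y3)) + (-4) * ((x1 - y1) * (x0 + y0)) + (14) * ((x1 - y1) * (x1 + y1)) + (6) * ((x1 - y1) * (x2 + y2)) + (2) * ((x1 - y1) * (x3 + y3)) + (6) * ((x2 - y2) * (x0 + y0)) + (6) * ((x2 - y2) * (x1 + y1)) + (9) * ((x2 - y2) * (x2 + y2)) + (-3) * ((x2 - y2) * (x3 + y3)) + (2) * ((x3 - y3) * (x0 + y0)) + (2) * ((x3 - y3) * (x1 + y1)) + (-3) * ((x3 - y3) * (x2 + y2)) + (17) * ((x3 - y3) * (x3 + y3)) = 0) by lra.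
assert (P5 : (12) * ((x0 - y0) * (x0 + y0)) + (8) * ((x1 - y1) * (x1 + y1)) + (4) * ((x1 - y1) * (x2 + y2)) + (4) * ((x1 - y1) * (x3 + y3)) + (4) * ((x2 - y2) * (x1 + y1)) + (8) * ((x2 - y2) * (x2 + y2)) + (-4) * ((x2 - y2) * (x3 + y3)) + (4) * ((x3 - y3) * (x1 + y1)) + (-4) * ((x3 - y3) * (x2 + y2)) + (8) * ((x3 - y3) * (x3 + y3)) = 0) by lra.
destruct (cert_core P0 P1 P2 P3 P4 P5) as [H|H]; [left|right]; repeat split; lra.
Qed.

Lemma unz (k : nat) : (S k <= 6)%coq_nat -> uval k 0 <> 0 \/ uval k 1 <> 0.
Proof.
intros hk; destruct k as [|[|[|[|[|[|k]]]]]]; simpl; try (left; lra); try (right; lra); lia.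
Qed.

End CoreSec.

From mathcomp Require Import ring.
Import Order.TTheory GRing.Theory Num.Theory.
Local Open Scope ring_scope.

Notation RR := Rdefinitions.R.

Lemma dotvE n (x y : Rn n) : dotv x y = (x *m y^T) 0 0.
Proof. by rewrite /dotv !mxE; apply: eq_bigr => i _; rewrite !mxE. Qed.

Lemma dotv_ge0 n (x : Rn n) : 0 <= dotv x x.
Proof. by rewrite /dotv; apply: sumr_ge0 => i _; rewrite -expr2 sqr_ge0. Qed.

Lemma dotv_eq0 n (x : Rn n) : dotv x x = 0 -> x = 0.
Proof.
rewrite /dotv => /eqP; rewrite psumr_eq0 => [/allP H|i _]; last by rewrite -expr2 sqr_ge0.
apply/rowP => i; rewrite mxE; have := H i (mem_index_enum _).
by rewrite mulf_eq0 orbb => /eqP.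
Qed.

Lemma mx11E (A : 'M[RR]_1) : A = (A 0 0)%:M.
Proof. exact: mx11_scalar. Qed.

Definition Wmat (u : Rn 4) : 'M[RR]_4 := (dotv u u)%:M - u^T *m u.

Lemma Wmat_mul (u v : Rn 4) : v *m Wmat u = dotv u u *: v - dotv v u *: u.
Proof.
rewrite /Wmat mulmxBr mul_mx_scalar mulmxA.
by rewrite [v *m u^T]mx11E -dotvE mul_scalar_mx.
Qed.

Lemma Wmat_tr (u : Rn 4) : (Wmat u)^T = Wmat u.
Proof. by rewrite /Wmat linearB /= tr_scalar_mx trmx_mul trmxK. Qed.

Lemma Wmat_u (u : Rn 4) : u *m Wmat u = 0.
Proof. by rewrite Wmat_mul subrr. Qed.

Lemma rank_Wmat (u : Rn 4) : u != 0 -> \rank (Wmat u) = 3%N.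
Proof.
move=> u0.
have uu0 : dotv u u != 0 by apply/eqP => /dotv_eq0 /eqP; rewrite (negbTE u0).
have e : (kermx (Wmat u) == u)%MS.
  apply/andP; split.
    apply/row_subP => i; set v := row i _.
    have hv : v *m Wmat u = 0 by rewrite /v -row_mul mulmx_ker row0.
    apply/sub_rVP; exists (dotv v u / dotv u u).
    move: hv; rewrite Wmat_mul => /eqP; rewrite subr_eq0 => /eqP hv.
    by apply: (scalerI uu0); rewrite hv scalerA mulrCA mulfV // mulr1.
  by rewrite sub_kermx Wmat_u.
have := mxrank_ker (Wmat u); rewrite (eqmx_rank e) rank_rV u0.
have := rank_leq_col (Wmat u).
case: (\rank (Wmat u)) => [|[|[|[|[|r]]]]] //=.
Qed.

Lemma rowfree_BBt m (B : 'M[RR]_(m, 4)) : row_free B -> B *m B^T \in unitmx.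
Proof.
move=> fB; rewrite -row_free_unit; apply: inj_row_free => v hv.
have h : (v *m B) *m (v *m B)^T = 0.
  by rewrite trmx_mul mulmxA -(mulmxA v) hv mul0mx.
have : dotv (v *m B) (v *m B) = 0 by rewrite dotvE h mxE.
move/dotv_eq0 => /eqP; rewrite (mulmx_free_eq0 _ fB) => /eqP //.
Qed.

Lemma orth_projW (u x : Rn 4) : u != 0 ->
  orth_proj (Wmat u) x = x - (dotv x u / dotv u u) *: u.
Proof.
move=> u0.
have uu0 : dotv u u != 0 by apply/eqP => /dotv_eq0 /eqP; rewrite (negbTE u0).
rewrite /orth_proj.
set B := row_base (Wmat u).
have BW : (B <= Wmat u)%MS by rewrite /B eq_row_base.
have Bu : u *m B^T = 0.
  case/submxP: BW => D ->.
  by rewrite trmx_mul Wmat_tr mulmxA Wmat_u mul0mx.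
have uBB : B *m B^T \in unitmx by apply: rowfree_BBt; apply: row_base_free.
set c := dotv x u / dotv u u.
have xW : x - c *: u = (dotv u u)^-1 *: (x *m Wmat u).
  by rewrite Wmat_mul scalerBr !scalerA mulVf // scale1r mulrC.
have : (x - c *: u <= B)%MS.
  by rewrite xW /B eq_row_base; apply: scalemx_sub; apply: submxMl.
case/submxP => v hv.
have -> : x = v *m B + c *: u by rewrite -hv subrK.
rewrite !mulmxDl -scalemxAl Bu scaler0 !mul0mx addr0.
by rewrite -(mulmxA v B) (mulmxK uBB) addrK.
Qed.


Definition i0 : 'I_4 := @Ordinal 4 0 isT.
Definition i1 : 'I_4 := @Ordinal 4 1 isT.
Definition i2 : 'I_4 := @Ordinal 4 2 isT.
Definition i3 : 'I_4 := @Ordinal 4 3 isT.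

Lemma sum4 (F : 'I_4 -> RR) : \sum_i F i = F i0 + F i1 + F i2 + F i3.
Proof.
rewrite !big_ord_recl big_ord0 addr0 !addrA.
by congr (_ + _ + _ + _); congr F; apply/val_inj.
Qed.

Lemma dotv4 (x y : Rn 4) : dotv x y =
  d4 (x 0 i0) (x 0 i1) (x 0 i2) (x 0 i3) (y 0 i0) (y 0 i1) (y 0 i2) (y 0 i3).
Proof. by rewrite /dotv sum4. Qed.

Lemma ord4_ind (P : 'I_4 -> Prop) : P i0 -> P i1 -> P i2 -> P i3 -> forall j, P j.
Proof.
move=> p0 p1 p2 p3 [[|[|[|[|j]]]] hj] //.
- by rewrite (_ : Ordinal hj = i0) //; apply/val_inj.
- by rewrite (_ : Ordinal hj = i1) //; apply/val_inj.
- by rewrite (_ : Ordinal hj = i2) //; apply/val_inj.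
- by rewrite (_ : Ordinal hj = i3) //; apply/val_inj.
Qed.

Lemma dotv_proj (u z : Rn 4) (c : RR) :
  dotv (z - c *: u) (z - c *: u) = dotv z z - 2 * c * dotv z u + c * c * dotv u u.
Proof.
rewrite /dotv !mulr_sumr -sumrB -big_split /=; apply: eq_bigr => i _.
rewrite !mxE; ring.
Qed.

Lemma alg (d a b : RR) : d != 0 ->
  a - 2 * (b / d) * b + (b / d) * (b / d) * d = (d * a - b * b) / d.
Proof. by move=> h; field. Qed.

Lemma key_eq (u x y : Rn 4) : u != 0 ->
  normv (orth_proj (Wmat u) x) = normv (orth_proj (Wmat u) y) ->
  dotv u u * dotv x x - dotv x u * dotv x u = dotv u u * dotv y y - dotv y u * dotv y u.
Proof.
move=> u0.
have uu0 : dotv u u != 0 by apply/eqP => /dotv_eq0 /eqP; rewrite (negbTE u0).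
rewrite /normv !orth_projW // => /eqP; rewrite eqr_sqrt ?dotv_ge0 // => /eqP.
rewrite !dotv_proj !alg // => /(congr1 ( *%R^~ (dotv u u))).
by rewrite !divfK.
Qed.

Definition U (i : 'I_6) : Rn 4 := \row_(j < 4) uval i j.

Lemma U_neq0 i : U i != 0.
Proof.
apply/eqP; case: i => k hk H.
have h0 := congr1 (fun M : Rn 4 => M 0 i0) H.
have h1 := congr1 (fun M : Rn 4 => M 0 i1) H.
rewrite !mxE /= in h0 h1.
by case: (unz (elimT ssrnat.leP hk)) => h; [apply: h; exact: h0 | apply: h; exact: h1].
Qed.

Theorem mainTheorem8 :
  exists W : 'I_6 -> 'M[Rdefinitions.R]_4,
    (forall i, hyperplane (W i)) /\ phase_retrieval W.
Proof.
exists (fun i => Wmat (U i)); split.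
  by move=> i; rewrite /hyperplane rank_Wmat // U_neq0.
move=> x y H.
have E (k : nat) (hk : ssrnat.leq (S k) 6) :
  Ek k (x 0 i0) (x 0 i1) (x 0 i2) (x 0 i3) (y 0 i0) (y 0 i1) (y 0 i2) (y 0 i3).
  have := key_eq (U_neq0 (Ordinal hk)) (H (Ordinal hk)).
  by rewrite !dotv4 !mxE /=.
have := core_xy (E 0%N isT) (E 1%N isT) (E 2%N isT) (E 3%N isT) (E 4%N isT) (E 5%N isT).
case=> [[h0 [h1 [h2 h3]]] | [h0 [h1 [h2 h3]]]]; [left|right]; apply/rowP;
  apply: ord4_ind; rewrite ?mxE; assumption.
Qed.
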